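(* Let $U\colon[0,1]^2\to[0,1]$ be a uninorm with neutral element $e\in(0,1)$. Define $U^*,U_*\colon[0,1]^2\to[0,1]$ by $U^*(x,y)=1$ if $\max(x,y)=1$, $U^*(x,y)=0$ if $\min(x,y)=0$ and $\max(x,y)<1$, and $U^*(x,y)=U(x,y)$ otherwise; and $U_*(x,y)=0$ if $\min(x,y)=0$, $U_*(x,y)=1$ if $\min(x,y)>0$ and $\max(x,y)=1$, and $U_*(x,y)=U(x,y)$ otherwise. Then $U^*$ and $U_*$ are both uninorms if and only if there are no $x_1,x_2\in(0,1)$ with $U(x_1,x_2)\in\{0,1\}$.
   Context: A uninorm is a binary operation on $[0,1]$ that is commutative, associative, non-decreasing in each variable and has a neutral element $e$. *)

(* Defs.v *)
From Stdlib Require Import Reals.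
Open Scope R_scope.

Definition in01 (x : R) : Prop := 0 <= x <= 1.

(* A binary operation on [0,1] is modelled as F : R -> R -> R; only its
   values on [0,1]^2 matter. *)
Definition is_uninorm (F : R -> R -> R) (e : R) : Prop :=
  in01 e /\
  (forall x y, in01 x -> in01 y -> in01 (F x y)) /\
  (forall x y, in01 x -> in01 y -> F x y = F y x) /\
  (forall x y z, in01 x -> in01 y -> in01 z -> F x (F y z) = F (F x y) z) /\
  (forall x y z, in01 x -> in01 y -> in01 z -> y <= z -> F x y <= F x z) /\
  (forall x, in01 x -> F e x = x).

Definition upper_mod (U : R -> R -> R) (x y : R) : R :=
  if Req_EM_T (Rmax x y) 1 then 1
  else if Req_EM_T (Rmin x y) 0 then 0
  else U x y.

Definition lower_mod (U : R -> R -> R) (x y : R) : R :=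
  if Req_EM_T (Rmin x y) 0 then 0
  else if Req_EM_T (Rmax x y) 1 then 1
  else U x y.

(* Main.v *)
Require Import Defs.
From Stdlib Require Import Reals Lra.
Open Scope R_scope.

Ltac mcase := unfold upper_mod, lower_mod, Rmax, Rmin;
  repeat match goal with
  | |- context [Rle_dec ?a ?b] => destruct (Rle_dec a b)
  | |- context [Req_EM_T ?a ?b] => destruct (Req_EM_T a b)
  end; try reflexivity; lra.

Section S.
Variable U : R -> R -> R.
Lemma up_1l b : 0 <= b <= 1 -> upper_mod U 1 b = 1. Proof. intros; mcase. Qed.
Lemma up_1r a : 0 <= a <= 1 -> upper_mod U a 1 = 1. Proof. intros; mcase. Qed.
Lemma up_0l b : 0 <= b < 1 -> upper_mod U 0 b = 0. Proof. intros; mcase. Qed.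
Lemma up_0r a : 0 <= a < 1 -> upper_mod U a 0 = 0. Proof. intros; mcase. Qed.
Lemma up_int a b : 0 < a < 1 -> 0 < b < 1 -> upper_mod U a b = U a b. Proof. intros; mcase. Qed.
Lemma lo_0l b : 0 <= b <= 1 -> lower_mod U 0 b = 0. Proof. intros; mcase. Qed.
Lemma lo_0r a : 0 <= a <= 1 -> lower_mod U a 0 = 0. Proof. intros; mcase. Qed.
Lemma lo_1l b : 0 < b <= 1 -> lower_mod U 1 b = 1. Proof. intros; mcase. Qed.
Lemma lo_1r a : 0 < a <= 1 -> lower_mod U a 1 = 1. Proof. intros; mcase. Qed.
Lemma lo_int a b : 0 < a < 1 -> 0 < b < 1 -> lower_mod U a b = U a b. Proof. intros; mcase. Qed.
End S.

Lemma tri x : in01 x -> x = 0 \/ (0 < x < 1) \/ x = 1.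
Proof. unfold in01; intros; lra. Qed.

Ltac side Hcl :=
  first [ lra
        | match goal with |- context [?U ?a ?b] =>
            let h := fresh in assert (h : 0 < U a b < 1) by (apply Hcl; side Hcl); lra end ].

Ltac simp U Hcl :=
  repeat match goal with
  | |- context [upper_mod U ?a ?b] =>
      first [ rewrite (up_1l U b) by side Hcl | rewrite (up_1r U a) by side Hcl
            | rewrite (up_0l U b) by side Hcl | rewrite (up_0r U a) by side Hcl
            | rewrite (up_int U a b) by side Hcl ]
  | |- context [lower_mod U ?a ?b] =>
      first [ rewrite (lo_0l U b) by side Hcl | rewrite (lo_0r U a) by side Hcl
            | rewrite (lo_1l U b) by side Hcl | rewrite (lo_1r U a) by side Hcl
            | rewrite (lo_int U a b) by side Hcl ]
  end.

Ltac fin U Hcl Hrange Hcomm Has Hmono Hneu :=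
  first [ reflexivity | lra
        | apply Hcomm; try red; lra
        | apply Has; try red; lra
        | apply Hneu; try red; lra
        | apply Hmono; try red; lra
        | try red; split; lra
        | match goal with |- context [U ?a ?b] =>
            let h := fresh in assert (h : 0 < U a b < 1) by (apply Hcl; side Hcl);
            try red; lra end ].

Theorem lemma2 (U : R -> R -> R) (e : R) :
  is_uninorm U e -> 0 < e < 1 ->
  ((exists e1, is_uninorm (upper_mod U) e1) /\ (exists e2, is_uninorm (lower_mod U) e2)
   <->
   ~ (exists x1 x2, 0 < x1 < 1 /\ 0 < x2 < 1 /\ (U x1 x2 = 0 \/ U x1 x2 = 1))).
Proof.
  intros HU He.
  destruct HU as [He01 [Hrange [Hcomm [Has [Hmono Hneu]]]]].
  split.
  - intros [[e1 Hu] [e2 Hl]] [x1 [x2 [h1 [h2 [H0|H1]]]]].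
    + destruct Hl as [_ [_ [_ [Hl _]]]].
      specialize (Hl x1 x2 1). unfold in01 in Hl.
      rewrite (lo_1r U x2), (lo_1r U x1), (lo_int U x1 x2), H0, (lo_0l U 1) in Hl; lra.
    + destruct Hu as [_ [_ [_ [Hu _]]]].
      specialize (Hu x1 x2 0). unfold in01 in Hu.
      rewrite (up_0r U x2), (up_0r U x1), (up_int U x1 x2), H1, (up_1l U 0) in Hu; lra.
  - intros Hn.
    assert (Hcl : forall a b, 0 < a < 1 -> 0 < b < 1 -> 0 < U a b < 1).
    { intros a b ha hb. assert (h : in01 (U a b)) by (apply Hrange; try red; lra).
      red in h. destruct (Req_dec (U a b) 0); [exfalso; apply Hn; exists a, b; tauto|].
      destruct (Req_dec (U a b) 1); [exfalso; apply Hn; exists a, b; tauto|]. lra. }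
    split; exists e; repeat split; unfold in01 in *; try lra.
    all: intros;
      repeat match goal with
      | H : 0 <= ?x <= 1 |- _ => destruct (tri x H) as [->|[?| ->]]; clear H
      end;
      simp U Hcl; fin U Hcl Hrange Hcomm Has Hmono Hneu.
Qed.
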